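(* For every positive integer $l$ there is a constant $c_l$ such that the following holds. Let $T$ be an out-directed tree on $n$ vertices with $l$ out-leaves, and let $m$ be a positive integer. Then every directed graph $G$ on at least $c_l n m$ vertices either contains a copy of $T$ as a subgraph or contains an independent set of size $m$.
   Context: An out-directed tree is an oriented tree (underlying graph a tree, no bidirected edges) with a root $r$ such that all edges are directed away from $r$. An out-leaf is a vertex of out-degree $0$. An independent set in a directed graph is a set of vertices with no edge (in either direction) between any two of them. *)

(* Defs.v *)
From mathcomp Require Import all_boot.
Set Implicit Arguments. Unset Strict Implicit. Unset Printing Implicit Defensive.

(* A directed graph on a finite vertex type V is an edge relation E : rel V
   (E x y means there is an edge x -> y). *)

Definition und_adj (V : finType) (E : rel V) : rel V := fun x y => E x y || E y x.

Definition n_edges (V : finType) (E : rel V) : nat :=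
  #|[set p : V * V | E p.1 p.2]|.

Definition oriented (V : finType) (E : rel V) : Prop :=
  (forall x, ~~ E x x) /\ (forall x y, E x y -> ~~ E y x).

(* the underlying undirected graph is a tree: nonempty, connected,
   with exactly |V| - 1 edges (for an oriented graph, directed edges
   correspond bijectively to undirected edges). *)
Definition underlying_tree (V : finType) (E : rel V) : Prop :=
  0 < #|V| /\ (forall x y, connect (und_adj E) x y) /\ n_edges E + 1 = #|V|.

(* out-directed tree: oriented tree with a root r such that every edge
   is directed away from r, i.e. its tail is reachable from r by a
   directed path. *)
Definition out_tree (V : finType) (E : rel V) : Prop :=
  oriented E /\ underlying_tree E /\
  exists r : V, forall u v, E u v -> connect E r u.

Definition out_leaves (V : finType) (E : rel V) : {set V} :=
  [set v | [forall w, ~~ E v w]].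

Definition contains_copy (T V : finType) (ET : rel T) (G : rel V) : Prop :=
  exists f : T -> V, injective f /\ forall u v, ET u v -> G (f u) (f v).

Definition independent (V : finType) (G : rel V) (S : {set V}) : Prop :=
  forall x y, x \in S -> y \in S -> x != y -> ~~ G x y.

(* Main.v *)
Require Import Defs.
From mathcomp Require Import all_boot.
From mathcomp Require Import zify.
From Stdlib Require Import Classical.
Set Implicit Arguments. Unset Strict Implicit. Unset Printing Implicit Defensive.

Lemma card_sum (T : finType) (B : {set T}) (P : pred T) :
  #|[set x in B | P x]| = \sum_(x in B) P x.
Proof.
rewrite -sum1_card big_mkcond [RHS]big_mkcond; apply: eq_bigr => x _.
by rewrite !inE; case: (x \in B); case: (P x).
Qed.

Lemma indep_lemma (A : finType) (R : rel A) K : 0 < K -> forall B : {set A},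
  (forall a, a \in B -> #|[set b in B | R a b]| < K) ->
  exists I : {set A}, [/\ I \subset B,
     (forall x y, x \in I -> y \in I -> x != y -> ~~ R x y) &
     #|B| <= (2*K-1) * #|I|].
Proof.
move=> K0 B; have [n] := ubnP #|B|; elim: n B => // n IH B szB Hout.
case: (set_0Vmem B) => [->|[v0 v0B]].
  by exists set0; split; rewrite ?sub0set ?cards0 // => x y; rewrite inE.
have : [exists v in B, #|[set u in B | R u v]| < K].
  apply: contraT; rewrite negb_exists => /forallP Hall.
  have H1 : \sum_(v in B) K <= \sum_(v in B) #|[set u in B | R u v]|.
    apply: leq_sum => v vB; move: (Hall v); rewrite vB /= -leqNgt; exact.
  have H2 : \sum_(v in B) #|[set u in B | R u v]| =
            \sum_(u in B) #|[set v in B | R u v]|.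
    under eq_bigr => v _ do rewrite card_sum.
    rewrite exchange_big /=; apply: eq_bigr => u _; by rewrite card_sum.
  have H3 : \sum_(u in B) #|[set v in B | R u v]| < \sum_(u in B) K.
    rewrite (bigD1 v0) //= [X in _ < X](bigD1 v0) //=.
    rewrite -addSn; apply: leq_add; first exact: Hout.
    apply: leq_sum => u /andP[uB _]; exact: ltnW (Hout u uB).
  by have := leq_ltn_trans (leq_trans H1 (eq_leq H2)) H3; rewrite ltnn.
case/exists_inP => v vB vin.
pose N := [set v] :|: [set u in B | R u v] :|: [set u in B | R v u].
pose B' := B :\: N.
have vN : v \in N by rewrite !inE eqxx.
have szB' : #|B'| < n.
  have : #|B'| < #|B|.
    apply: proper_card; apply/properP; split; first exact: subsetDl.
    by exists v => //; rewrite inE vN.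
  move=> h; exact: leq_trans h _.
have Hout' : forall a, a \in B' -> #|[set b in B' | R a b]| < K.
  move=> a aB'; apply: leq_ltn_trans (Hout a (subsetP (subsetDl B N) a aB')).
  apply: subset_leq_card; apply/subsetP => b; rewrite !inE.
  by case/andP => /andP[_ ->] ->.
have [I [IB' Iind szI]] := IH B' szB' Hout'.
have vI : v \notin I by apply/negP => /(subsetP IB'); rewrite inE vN.
exists (v |: I); split.
- by rewrite subUset sub1set vB (subset_trans IB' (subsetDl _ _)).
- have key : forall x, x \in I -> ~~ R v x && ~~ R x v.
    move=> x /(subsetP IB'); rewrite !inE !negb_or => /andP[/andP[/andP[_ h1] h2] xB].
    by rewrite xB /= in h1 h2; rewrite h1 h2.
  move=> x y; rewrite !inE => /orP[/eqP->|xI] /orP[/eqP->|yI]; rewrite ?eqxx //.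
  + by move=> _; case/andP: (key y yI).
  + by move=> _; case/andP: (key x xI).
  + exact: Iind.
- rewrite cardsU1 vI mulnDr muln1 addnC.
  have hN : #|N| <= 2*K-1.
    apply: leq_trans (leq_card_setU _ _) _.
    apply: leq_trans (leq_add (leq_card_setU _ _) (leqnn _)) _.
    rewrite cards1.
    have h1 := Hout v vB.
    have h2 : #|[set u in B | R u v]| <= K - 1 by rewrite leq_subRL // addnC addn1.
    have h3 : #|[set u in B | R v u]| <= K - 1 by rewrite leq_subRL // addnC addn1.
    rewrite -addnA; apply: leq_trans (leq_add (leqnn 1) (leq_add h2 h3)) _.
    lia.
  have : #|B| <= #|B'| + #|N|.
    rewrite /B' -{1}(cardsID N B) addnC; apply: leq_add => //; exact: subset_leq_card (subsetIr _ _).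
  move=> h; apply: leq_trans h _; nia.
Qed.

Lemma sub_card_eq (T : finType) (S : {set T}) m : m <= #|S| ->
  exists S' : {set T}, S' \subset S /\ #|S'| = m.
Proof.
have [k] := ubnP (#|S| - m); elim: k S => // k IH S hk hm.
case: (ltngtP m #|S|) hm => // [lt _|-> _]; last by exists S.
have [x xS] : exists x, x \in S by apply/card_gt0P; apply: leq_ltn_trans lt.
have c : #|S :\ x| = #|S|.-1 by rewrite (cardsD1 x S) xS.
have h1 : #|S :\ x| - m < k by rewrite c; lia.
have h2 : m <= #|S :\ x| by rewrite c; lia.
have [S' [s1 s2]] := IH (S :\ x) h1 h2.
by exists S'; split => //; apply: subset_trans s1 (subsetDl _ _).
Qed.

Section GR.
Variables (V : finType) (G : rel V) (W : {set V}).
Definition Gs : {set V * V} :=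
  [set p | [&& p.1 \in W, p.2 \in W, p.1 != p.2 & G p.1 p.2]].
Definition erel (E : {set V * V}) : rel V := fun x y => (x, y) \in E.
Definition acyc (E : {set V * V}) : bool :=
  [forall x, forall y, ((x, y) \in E) ==> ~~ connect (erel E) y x].

Lemma acyc_uniq E x p : acyc E -> path (erel E) x p -> uniq (x :: p).
Proof.
move=> /forallP aE; elim: p x => [|y p IH] x //= /andP[exy py].
have /= -> := IH y py; rewrite andbT; apply/negP => xin.
have := path_connect py xin.
by move: (aE x) => /forallP /(_ y) /implyP /(_ exy) /negP.
Qed.

Lemma connect_add E u v a b : connect (erel ((u, v) |: E)) a b ->
  connect (erel E) a b \/ (connect (erel E) a u /\ connect (erel E) v b).
Proof.
case/connectP => p pp ->; elim: p a pp => [|c p IH] a /=.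
  by move=> _; left; exact: connect0.
case/andP => eac pc; case: (IH c pc) => [h|[h1 h2]].
- move: eac; rewrite /erel in_setU1 => /orP[/eqP[ea ec]|eac].
  + by subst; right; split; [exact: connect0| exact: h].
  + by left; apply: connect_trans h; apply: connect1.
- right; split => //.
  move: eac; rewrite /erel in_setU1 => /orP[/eqP[-> _]|eac]; first exact: connect0.
  by apply: connect_trans h1; apply: connect1.
Qed.

Definition E0 := [arg max_(E > set0 | acyc E && (E \subset Gs)) #|E|].

Lemma E0_spec : [/\ acyc E0, E0 \subset Gs &
   forall E, acyc E -> E \subset Gs -> #|E| <= #|E0| ].
Proof.
rewrite /E0; case: arg_maxnP => [|E /andP[aE sE] Hmax].
  by rewrite sub0set andbT; apply/forallP=> x; apply/forallP => y; rewrite inE.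
by split => // E' a s; apply: Hmax; rewrite a s.
Qed.

Lemma E0_max u v : (u, v) \in Gs -> (u, v) \notin E0 -> connect (erel E0) v u.
Proof.
move=> uvG uvE; have [aE sE Hm] := E0_spec.
case: (boolP (acyc ((u, v) |: E0))) => a'.
  have := Hm _ a'; rewrite subUset sub1set uvG sE cardsU1 uvE.
  by move=> /(_ isT); rewrite add1n ltnn.
move: a'; rewrite /acyc negb_forall => /existsP [x]; rewrite negb_forall.
move=> /existsP [y]; rewrite negb_imply negbK => /andP [xy cyx].
have aE' := aE; move/forallP: aE => aE.
case: (connect_add cyx) => [h|[h1 h2]].
- move: xy; rewrite in_setU1 => /orP[/eqP[ex ey]|xy]; first by subst.
  by move: (aE x) => /forallP /(_ y) /implyP /(_ xy); rewrite h.
- move: xy; rewrite in_setU1 => /orP[/eqP[ex ey]|xy]; first by subst.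
  exact: connect_trans h2 (connect_trans (@connect1 _ (erel E0) _ _ xy) h1).
Qed.

Definition Pk (v : V) (k : nat) : bool :=
  [exists p : k.-tuple V, path (erel E0) v p].

Lemma Pk_seq v s : path (erel E0) v s -> Pk v (size s).
Proof. by move=> ps; apply/existsP; exists (in_tuple s). Qed.

Lemma Pk_bound v k : Pk v k -> k < #|V|.
Proof.
case/existsP => p pp; have [aE _ _] := E0_spec.
have u := acyc_uniq aE pp.
have := max_card (mem (v :: p)); rewrite (card_uniqP u) /= size_tuple; exact.
Qed.

Definition hlev v := \max_(k < #|V| | Pk v k) k.

Lemma hlev_spec v : Pk v (hlev v).
Proof.
have h0 : 0 < #|V| by apply/card_gt0P; exists v.
have p0 : Pk v 0 by exact: (@Pk_seq v [::]).
have c : 0 < #|[pred k : 'I_#|V| | Pk v k]|.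
  by apply/card_gt0P; exists (Ordinal h0).
case: (eq_bigmax_cond (fun k : 'I_#|V| => nat_of_ord k) c) => i0 Hi0 Hm.
by rewrite /hlev Hm; exact Hi0.
Qed.

Lemma hlev_ge v k : Pk v k -> k <= hlev v.
Proof.
move=> pk; have kb := Pk_bound pk.
exact: (@leq_bigmax_cond _ (fun k : 'I_#|V| => Pk v k) (fun k => nat_of_ord k) (Ordinal kb) pk).
Qed.

Lemma hlev_neq u v : (u, v) \in Gs -> hlev u != hlev v.
Proof.
move=> uvG; case: (boolP ((u, v) \in E0)) => uvE.
  case/existsP: (hlev_spec v) => p pp.
  have : Pk u (size (v :: p)) by apply: Pk_seq; rewrite /= pp andbT; exact uvE.
  rewrite /= size_tuple => /hlev_ge h; rewrite neq_ltn; apply/orP; right; exact h.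
have := E0_max uvG uvE; case/connectP => q qp qlast.
case/existsP: (hlev_spec u) => p pp.
have : Pk v (size (q ++ p)) by apply: Pk_seq; rewrite cat_path qp -qlast pp.
move/hlev_ge; rewrite size_cat size_tuple => h.
have : q != [::].
  apply/eqP => q0; move: qlast uvG; rewrite q0 /= => ->; rewrite inE /=.
  by case/and4P; rewrite eqxx.
case: q {qp qlast} h => // a q h _; rewrite neq_ltn; apply/orP; left.
by apply: leq_trans h; rewrite /= addSn ltnS leq_addl.
Qed.

Lemma count_levels N :
  #|[set v in W | hlev v < N]| <= \sum_(k < N) #|[set v in W | hlev v == k]|.
Proof.
elim: N => [|N IH].
  by rewrite big_ord0 leqn0 cards_eq0; apply/eqP/setP => x; rewrite !inE andbF.
rewrite big_ord_recr /=.
have -> : [set v in W | hlev v < N.+1] =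
   [set v in W | hlev v < N] :|: [set v in W | hlev v == N].
  by apply/setP => x; rewrite !inE ltnS leq_eqVlt; case: (x \in W) => //=; rewrite orbC.
by apply: leq_trans (leq_card_setU _ _) _; apply: leq_add.
Qed.

Lemma GR n m : 0 < n -> (forall S : {set V}, #|S| = m -> ~ independent G S) ->
  n.-1 * m.-1 < #|W| ->
  exists p : nat -> V, [/\ forall i j, i < n -> j < n -> p i = p j -> i = j,
     forall i, i < n -> p i \in W & forall i, i.+1 < n -> G (p i) (p i.+1)].
Proof.
move=> n0 noind szW.
have [aE sE _] := E0_spec.
have edgeG : forall x y, erel E0 x y -> [&& x \in W, y \in W, x != y & G x y].
  by move=> x y /(subsetP sE); rewrite inE.
case: (boolP [exists v in W, n.-1 <= hlev v]).
  case/exists_inP => v vW hv.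
  case/existsP: (hlev_spec v) => p pp.
  have u := acyc_uniq aE pp.
  have sz : n <= size (v :: p) by rewrite /= size_tuple; lia.
  exists (fun i => nth v (v :: p) i); split.
  - move=> i j ilt jlt e; apply/eqP; rewrite -(nth_uniq v _ _ u); first by rewrite e.
    + exact: leq_trans ilt sz.
    + exact: leq_trans jlt sz.
  - case=> [|i] ilt //=.
    have hi : i < size p by rewrite size_tuple; move: sz; rewrite /= size_tuple; lia.
    have := (pathP v pp i hi).
    by move/edgeG => /and4P[].
  - move=> i ilt.
    have hi : i < size p by rewrite size_tuple; move: sz; rewrite /= size_tuple; lia.
    have := (pathP v pp i hi).
    by move/edgeG => /and4P[].
rewrite negb_exists_in => /forall_inP Hlt.
have eqW : [set v in W | hlev v < n.-1] = W.
  by apply/setP => x; rewrite !inE; case xW: (x \in W) => //=; rewrite ltnNge Hlt.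
have Lsmall : forall k, #|[set v in W | hlev v == k]| <= m.-1.
  move=> k; rewrite leqNgt; apply/negP => big.
  have hm : m <= #|[set v in W | hlev v == k]| by lia.
  have [S [sS cS]] := sub_card_eq hm.
  apply: (noind S cS) => x y xS yS xy; apply/negP => gxy.
  have := subsetP sS x xS; have := subsetP sS y yS; rewrite !inE.
  case/andP => yW /eqP hy; case/andP => xW /eqP hx.
  have : (x, y) \in Gs by rewrite inE /= xW yW xy gxy.
  by move/hlev_neq; rewrite hx hy eqxx.
have := count_levels n.-1; rewrite eqW => h.
have h' : \sum_(k < n.-1) #|[set v in W | hlev v == k]| <= \sum_(k < n.-1) m.-1.
  by apply: leq_sum => k _; exact: Lsmall.
have := leq_trans h h'.
rewrite sum_nat_const card_ord; lia.
Qed.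
End GR.

Lemma paths_family (V : finType) (G : rel V) (x0 : V) n m M : 0 < n ->
  (forall S : {set V}, #|S| = m -> ~ independent G S) ->
  (M + m) * n <= #|V| ->
  exists Q : nat -> nat -> V,
    (forall a i b j, a < M -> i < n -> b < M -> j < n -> Q a i = Q b j -> a = b /\ i = j)
    /\ (forall a i, a < M -> i.+1 < n -> G (Q a i) (Q a i.+1)).
Proof.
move=> n0 noind; elim: M => [|M IH] hV.
  by exists (fun _ _ => x0); split.
have [Q [Qinj Qe]] := IH (leq_trans (leq_mul (leq_add (leqnSn M) (leqnn m)) (leqnn n)) hV).
pose Im := [set (fun pr : 'I_M * 'I_n => Q pr.1 pr.2) x | x in [set: 'I_M * 'I_n]].
pose W := ~: Im.
have cIm : #|Im| <= M * n.
  by apply: leq_trans (leq_imset_card _ _) _; rewrite cardsT card_prod !card_ord.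
have cW : n.-1 * m.-1 < #|W|.
  have : #|W| = #|V| - #|Im| by rewrite /W cardsCs setCK.
  move=> ->; nia.
have [p [pinj pW pe]] := GR n0 noind cW.
have pnot : forall a i j, a < M -> i < n -> j < n -> p j <> Q a i.
  move=> a i j aM iN jN e; have := pW j jN; rewrite /W inE e; apply/negP/negPn.
  by apply/imsetP; exists (Ordinal aM, Ordinal iN).
exists (fun a i => if a == M then p i else Q a i); split.
- move=> a i b j aM iN bM jN; rewrite !ltnS in aM bM.
  case: (ltngtP a M) aM => // [aM _|-> _]; case: (ltngtP b M) bM => // [bM _|-> _].
  + exact: Qinj.
  + by move=> e; exfalso; exact: pnot aM iN jN (esym e).
  + by move=> e; exfalso; exact: pnot bM jN iN e.
  + by move=> e; split => //; exact: pinj.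
- move=> a i aM iN; rewrite ltnS in aM; case: (ltngtP a M) aM => //.
  + move=> aM' _; exact: Qe.
  + move=> e _; subst a; exact: pe.
Qed.

Section Tree.
Variables (T : finType) (ET : rel T) (r : T).
Hypothesis Hund : forall x y, connect (und_adj ET) x y.
Hypothesis Hedges : n_edges ET + 1 = #|T|.
Hypothesis Hroot : forall u v, ET u v -> connect ET r u.

Lemma reach v : connect ET r v.
Proof.
have gen : forall x p, connect ET r x -> path (und_adj ET) x p ->
    connect ET r (last x p).
  move=> x p; elim: p x => [|y p IH] x cx //= /andP[xy py].
  apply: IH py; move: xy; rewrite /und_adj => /orP[xy|yx].
  - by apply: connect_trans cx (connect1 xy).
  - exact: Hroot yx.
have := Hund r v; case/connectP => p pp ->; apply: gen pp; exact: connect0.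
Qed.

Lemma indeg_pos v : v != r -> exists u, ET u v.
Proof.
move=> vr; case/connectP: (reach v) => p; case/lastP: p => [|q w].
  by move=> _ /= e; rewrite e eqxx in vr.
by rewrite rcons_path last_rcons => /andP[_ e] ->; exists (last r q).
Qed.

Definition indeg v := #|[set u | ET u v]|.

Lemma sum_indeg : \sum_v indeg v = #|T|.-1.
Proof.
have -> : #|T|.-1 = n_edges ET by rewrite -Hedges addn1.
have e1 : forall v, indeg v = \sum_u ET u v.
  move=> v; rewrite /indeg -sum1_card big_mkcond /=; apply: eq_bigr => u _.
  by rewrite inE; case: (ET u v).
have e2 : n_edges ET = \sum_(p : T * T) ET p.1 p.2.
  rewrite /n_edges -sum1_card big_mkcond /=; apply: eq_bigr => p _.
  by rewrite inE; case: (ET p.1 p.2).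
under eq_bigr => v _ do rewrite e1.
by rewrite e2 exchange_big pair_big.
Qed.

Lemma indeg_spec : indeg r = 0 /\ forall v, v != r -> indeg v = 1.
Proof.
have S := sum_indeg; rewrite (bigD1 r) //= in S.
have ge1 : forall v, v != r -> 0 < indeg v.
  move=> v /indeg_pos [u e]; apply/card_gt0P; exists u; by rewrite inE.
have split : \sum_(v | v != r) indeg v =
             \sum_(v | v != r) 1 + \sum_(v | v != r) (indeg v - 1).
  rewrite -big_split /=; apply: eq_bigr => v vr; have := ge1 v vr; lia.
have c1 : \sum_(v | v != r) 1 = #|T|.-1.
  by rewrite sum1_card cardC1.
rewrite split c1 in S.
set s := \sum_(v | v != r) (indeg v - 1) in S *. have h0 : indeg r = 0 /\ s = 0 by move: S; set t := #|T|.-1; lia.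
case: h0 => h0 h1; split => // v vr.
move/eqP: h1; rewrite sum_nat_eq0 => /forallP /(_ v); rewrite vr /= => /eqP.
have := ge1 v vr; lia.
Qed.

Definition par v := odflt v [pick u | ET u v].

Lemma edge_par u v : ET u v -> v != r /\ u = par v.
Proof.
move=> e; have [i0 i1] := indeg_spec.
have vr : v != r.
  apply/negP => /eqP vr; subst v; move: i0; rewrite /indeg => /eqP; rewrite cards_eq0.
  by move/eqP/setP => /(_ u); rewrite !inE e.
split => //; rewrite /par; case: pickP => [w ew|/(_ u)]; last by rewrite e.
have := i1 v vr; rewrite /indeg => /eqP /cards1P [z hz].
have := in_set1 u z; rewrite -hz inE e => /esym/eqP ->.
have := in_set1 w z; rewrite -hz inE ew => /esym/eqP ->. by [].
Qed.

Lemma par_edge v : v != r -> ET (par v) v.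
Proof. by move=> /indeg_pos [u e]; have [_ <-] := edge_par e. Qed.

Lemma par_r : par r = r.
Proof.
rewrite /par; case: pickP => //= u e.
by have [] := edge_par e; rewrite eqxx.
Qed.

Lemma iter_par_r k : iter k par r = r.
Proof. by elim: k => //= k ->; rewrite par_r. Qed.

Lemma iter_reach v : exists k, iter k par v == r.
Proof.
case/connectP: (reach v) => p pp ->; exists (size p); apply/eqP.
elim/last_ind: p pp => [|q w IH] //.
rewrite rcons_path last_rcons size_rcons iterSr => /andP[pq e].
by have [_ <-] := edge_par e; apply: IH.
Qed.

Definition dep v := ex_minn (iter_reach v).

Lemma dep_spec v : iter (dep v) par v = r /\ forall k, iter k par v = r -> dep v <= k.
Proof.
rewrite /dep; case: ex_minnP => k /eqP hk hmin; split => // j hj; apply: hmin; exact/eqP.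
Qed.

Lemma dep_r : dep r = 0.
Proof. by have [_ h] := dep_spec r; apply/eqP; rewrite -leqn0; apply: h. Qed.

Lemma dep_par v : v != r -> dep v = (dep (par v)).+1.
Proof.
move=> vr; have [h1 m1] := dep_spec v; have [h2 m2] := dep_spec (par v).
have : dep v <= (dep (par v)).+1 by apply: m1; rewrite iterSr.
case: (dep v) h1 m1 => [|d] h1 m1; first by move: h1 => /= e; rewrite e eqxx in vr.
rewrite iterSr in h1; rewrite ltnS => le.
congr _.+1; apply/eqP; rewrite eqn_leq le /=; exact: m2.
Qed.

Lemma dep_lt v : dep v < #|T|.
Proof.
case/connectP: (reach v) => p pp ->.
case: (shortenP pp) => p' pp' u _.
have h : iter (size p') par (last r p') = r.
  elim/last_ind: p' pp' {u} => [|q w IH] //.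
  rewrite rcons_path last_rcons size_rcons iterSr => /andP[pq e].
  by have [_ <-] := edge_par e; apply: IH.
have [_ m] := dep_spec (last r p').
apply: leq_ltn_trans (m _ h) _.
have := max_card (mem (r :: p')); rewrite (card_uniqP u) /=; exact.
Qed.

Definition cont u := odflt u [pick w | ET u w].
Definition cross v := (v != r) && (v != cont (par v)).

Lemma noncross_unique v w : v != r -> w != r -> ~~ cross v -> ~~ cross w ->
  par v = par w -> v = w.
Proof.
move=> vr wr; rewrite /cross vr wr /= !negbK => /eqP ev /eqP ew e.
by rewrite ev ew e.
Qed.

Lemma cont_edge u : u \notin out_leaves ET -> ET u (cont u).
Proof.
rewrite inE negb_forall => /existsP [w]; rewrite negbK => euw.
by rewrite /cont; case: pickP => [z ez|/(_ w)] //=; rewrite euw.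
Qed.

Lemma card_cross : #|[set v | cross v]| <= #|out_leaves ET| - 1.
Proof.
pose NC := [set v | (v != r) && ~~ cross v].
have h1 : #|~: out_leaves ET| <= #|NC|.
  rewrite -(@card_in_imset _ _ cont).
    apply: subset_leq_card; apply/subsetP => x /imsetP [u uI ->].
    rewrite inE in uI; have e := cont_edge uI; have [cr pu] := edge_par e.
    by rewrite inE cr /cross cr /= -pu eqxx.
  move=> u w uI wI e; rewrite inE in uI; rewrite inE in wI.
  have [_ pu] := edge_par (cont_edge uI); have [_ pw] := edge_par (cont_edge wI).
  by rewrite pu pw e.
have h2 : #|[set v | cross v]| + #|NC| = #|T|.-1.
  rewrite -(cardsC1 r) -(cardsID [set v | cross v] [set~ r]).
  congr (_ + _); apply: eq_card => v; rewrite !inE /cross.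
    by case: (v =P r).
  by rewrite andbC.
have h3 : #|~: out_leaves ET| = #|T| - #|out_leaves ET| by rewrite cardsCs setCK.
have h4 : #|out_leaves ET| <= #|T| := max_card _.
lia.
Qed.

Definition cr v := \sum_(i < dep v) cross (iter i par v).
Definition pos v := dep v - cr v.

Lemma cr_le v : cr v <= dep v.
Proof.
have : \sum_(i < dep v) cross (iter i par v) <= \sum_(i < dep v) 1.
  by apply: leq_sum => i _; exact: leq_b1.
by rewrite sum_nat_const card_ord muln1.
Qed.

Lemma cr_par v : v != r -> cr v = cross v + cr (par v).
Proof.
move=> vr; rewrite /cr dep_par // big_ord_recl /=.
congr (_ + _); apply: eq_bigr => i _.
by rewrite add0n -iterS iterSr.
Qed.

Lemma pos_noncross v : v != r -> ~~ cross v -> pos v = (pos (par v)).+1.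
Proof.
move=> vr nc; rewrite /pos dep_par // cr_par // (negbTE nc) add0n.
have := cr_le (par v); lia.
Qed.

Lemma pos_cross v : cross v -> pos v = pos (par v).
Proof.
move=> c; have vr : v != r by case/andP: c.
rewrite /pos dep_par // cr_par // c /=; have := cr_le (par v); lia.
Qed.

Lemma pos_lt v : pos v < #|T|.
Proof. by apply: leq_ltn_trans (dep_lt v); rewrite /pos leq_subr. Qed.

Lemma dep_par_lt v : v != r -> dep (par v) < dep v.
Proof. by move=> vr; rewrite (dep_par vr). Qed.

End Tree.

Lemma card_has (X Y : finType) (s : seq Y) (F : Y -> {set X}) :
  #|[set x | has (fun v => x \in F v) s]| <= \sum_(v <- s) #|F v|.
Proof.
elim: s => [|v s IH].
  by rewrite big_nil leqn0 cards_eq0; apply/eqP/setP => x; rewrite !inE.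
rewrite big_cons.
have -> : [set x | has (fun v => x \in F v) (v :: s)] =
          F v :|: [set x | has (fun v => x \in F v) s].
  by apply/setP => x; rewrite !inE.
by apply: leq_trans (leq_card_setU _ _) _; apply: leq_add.
Qed.

Section Embed.
Variables (T : finType) (ET : rel T) (r : T) (par : T -> T) (cross : pred T)
  (pos : T -> nat) (dep : T -> nat) (l : nat).
Variables (V : finType) (G : rel V) (n m M : nat) (Q : nat -> nat -> V).
Hypothesis Hedge : forall u v, ET u v -> v != r /\ u = par v.
Hypothesis Hnc : forall v, v != r -> ~~ cross v -> pos v = (pos (par v)).+1.
Hypothesis Hc : forall v, cross v -> v != r /\ pos v = pos (par v).
Hypothesis Hpos : forall v, pos v < n.
Hypothesis Hcard : #|[set v | cross v]| < l.
Hypothesis Huniq : forall v w, v != r -> w != r -> ~~ cross v -> ~~ cross w ->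
  par v = par w -> v = w.
Hypothesis Hdep : forall v, v != r -> dep (par v) < dep v.
Hypothesis Qinj : forall a i b j, a < M -> i < n -> b < M -> j < n ->
  Q a i = Q b j -> a = b /\ i = j.
Hypothesis Qe : forall a i, a < M -> i.+1 < n -> G (Q a i) (Q a i.+1).
Hypothesis noind : forall S : {set V}, #|S| = m -> ~ independent G S.
Hypothesis HM : l * (l * ((2 * l) * m)) < M.

Definition J := [set v | cross v].
Definition H (t : nat) : rel 'I_M := fun a b => G (Q a t) (Q b t).

Fixpoint Good (k : nat) : {set 'I_M} :=
  if k is k'.+1 then
    [set a in Good k' | [forall v in J, l <= #|[set b in Good k' | H (pos (par v)) a b]|]]
  else setT.

Lemma l_pos : 0 < l.
Proof. by apply: leq_ltn_trans Hcard. Qed.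

Lemma bad_bound (S : {set 'I_M}) t : t < n ->
  #|[set a in S | #|[set b in S | H t a b]| < l]| <= (2 * l - 1) * m.-1.
Proof.
move=> tn; set B := [set a in S | _].
have Hout : forall a, a \in B -> #|[set b in B | H t a b]| < l.
  move=> a; rewrite inE => /andP[_ h]; apply: leq_ltn_trans h.
  apply: subset_leq_card; apply/subsetP => b; rewrite !inE.
  by case/andP => /andP[-> _] ->.
have [I [IB Iind szI]] := indep_lemma l_pos Hout.
suff : #|I| <= m.-1 by move=> h; apply: leq_trans szI _; rewrite leq_mul2l h orbT.
rewrite leqNgt; apply/negP => big.
have hm : m <= #|I| by lia.
have [S' [sS cS]] := sub_card_eq hm.
pose f := fun a : 'I_M => Q a t.
have finj : injective f.
  move=> a b e; have [ab _] := Qinj (ltn_ord a) tn (ltn_ord b) tn e.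
  exact: val_inj.
apply: (noind (S := f @: S')).
  by rewrite card_imset.
move=> x y /imsetP [a aS ->] /imsetP [b bS ->] xy.
have ab : a != b by apply: contraNneq xy => ->.
exact: Iind (subsetP sS a aS) (subsetP sS b bS) ab.
Qed.

Lemma Good_dec k : Good k.+1 \subset Good k.
Proof. by apply/subsetP => a; rewrite /= inE => /andP[]. Qed.

Lemma Good_mono i j : i <= j -> Good j \subset Good i.
Proof.
move=> ij; rewrite -(subnK ij); elim: (j - i) => [|d IH] //.
by apply: subset_trans (Good_dec _) IH.
Qed.

Lemma Good_cover k : #|~: Good k| <= k * (#|J| * ((2 * l - 1) * m.-1)).
Proof.
elim: k => [|k IH].
  by rewrite /= setCT cards0.
pose B v := [set a in Good k | #|[set b in Good k | H (pos (par v)) a b]| < l].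
have sub : ~: Good k.+1 \subset ~: Good k :|: [set x | has (fun v => x \in B v) (enum J)].
  apply/subsetP => a; rewrite !inE /= negb_and => /orP[->//|].
  rewrite negb_forall => /existsP [v]; rewrite negb_imply -ltnNge => /andP[vJ lt].
  case aG : (a \in Good k) => //=; apply/hasP; exists v; first by rewrite mem_enum.
  by rewrite inE aG.
apply: leq_trans (subset_leq_card sub) _; apply: leq_trans (leq_card_setU _ _) _.
rewrite mulSn addnC; apply: leq_add => //.
apply: leq_trans (card_has _ _) _.
rewrite big_enum /=.
have : \sum_(v in J) #|B v| <= \sum_(v in J) ((2 * l - 1) * m.-1).
  apply: leq_sum => v vJ; apply: bad_bound; exact: Hpos.
by rewrite sum_nat_const.
Qed.

Lemma Good_nonempty : exists a, a \in Good l.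
Proof.
apply/set0Pn; rewrite -card_gt0.
have h := Good_cover l.
have h2 : #|Good l| + #|~: Good l| = M by rewrite cardsC card_ord.
have hJ : #|J| <= l by apply: ltnW; exact: Hcard.
have : l * (#|J| * ((2 * l - 1) * m.-1)) <= l * (l * ((2 * l) * m)).
  have e1 : 2 * l - 1 <= 2 * l by apply: leq_subr.
  have e2 : m.-1 <= m by apply: leq_pred.
  exact: leq_mul (leqnn l) (leq_mul hJ (leq_mul e1 e2)).
lia.
Qed.

Definition upd (psi : T -> 'I_M) (v : T) (b : 'I_M) : T -> 'I_M :=
  fun x => if x == v then b else psi x.

Record inv (X : {set T}) (psi : T -> 'I_M) : Prop := Inv {
  i_r : r \in X;
  i_par : forall x, x \in X -> x != r -> par x \in X;
  i_nc : forall x, x \in X -> x != r -> ~~ cross x -> psi x = psi (par x);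
  i_c : forall x, x \in X -> cross x -> H (pos (par x)) (psi (par x)) (psi x);
  i_inj : forall x y, x \in X -> y \in X -> psi x = psi y -> pos x = pos y -> x = y;
  i_good : forall x, x \in X -> psi x \in Good (l - #|X :&: J|);
  i_start : forall x, x \in X -> exists2 s, s \in X & ((s == r) || cross s) && (psi s == psi x);
  i_min : forall s y, s \in X -> y \in X -> (s == r) || cross s -> psi s = psi y -> pos s <= pos y
}.

Lemma inv_init : exists psi, inv [set r] psi.
Proof.
have [a0 a0G] := Good_nonempty.
exists (fun _ => a0); split.
- by rewrite inE.
- by move=> x; rewrite inE => /eqP ->; rewrite eqxx.
- by move=> x; rewrite inE => /eqP ->; rewrite eqxx.
- by move=> x; rewrite inE => /eqP -> /Hc []; rewrite eqxx.
- by move=> x y; rewrite !inE => /eqP -> /eqP ->.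
- move=> x _; have -> : [set r] :&: J = set0.
    by apply/setP => y; rewrite !inE; case: eqP => // ->; case: (boolP (cross r)) => // /Hc []; rewrite eqxx.
  by rewrite cards0 subn0.
- by move=> x _; exists r; rewrite ?inE ?eqxx.
- by move=> s y; rewrite !inE => /eqP -> /eqP ->.
Qed.

Lemma upd_v psi v b : upd psi v b v = b.
Proof. by rewrite /upd eqxx. Qed.

Lemma upd_X (X : {set T}) (psi : T -> 'I_M) (v : T) (b : 'I_M) (x : T) : v \notin X -> x \in X -> upd psi v b x = psi x.
Proof. by move=> vX xX; rewrite /upd ifN //; apply: contraNneq vX => <-. Qed.
Arguments upd_X {X} psi {v} b {x}.

Lemma used_card X psi : inv X psi -> #|psi @: X| <= #|X :&: J|.+1.
Proof.
move=> I; have sub : psi @: X \subset psi @: (X :&: ([set r] :|: J)).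
  apply/subsetP => a /imsetP [x xX ->]; have [s sX /andP[st /eqP e]] := i_start I xX.
  apply/imsetP; exists s => //; rewrite !inE sX /=; move: st; rewrite /J.
  by case/orP => ->; rewrite ?orbT.
apply: leq_trans (subset_leq_card sub) _; apply: leq_trans (leq_imset_card _ _) _.
rewrite setIUr; apply: leq_trans (leq_card_setU _ _) _.
rewrite -add1n; apply: leq_add => //.
by rewrite -(cards1 r); apply: subset_leq_card; apply: subsetIr.
Qed.

Lemma exists_notin (A B : {set 'I_M}) : #|B| < #|A| -> exists2 a, a \in A & a \notin B.
Proof.
move=> lt; apply/exists_inP; apply: contraTT lt; rewrite negb_exists_in => /forall_inP h.
rewrite -leqNgt; apply: subset_leq_card; apply/subsetP => a aA.
by move: (h a aA); rewrite negbK.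
Qed.

Lemma inv_step X psi v : inv X psi -> v \notin X -> v != r -> par v \in X ->
  exists psi', inv (v |: X) psi'.
Proof.
move=> I vX vr pvX.
have pv : par v != v by apply: contraNneq vX => <-.
case: (boolP (cross v)) => cv.
- set c := #|X :&: J|.
  have vJ : v \in J by rewrite inE.
  have cJ : c.+1 <= #|J|.
    have : v |: (X :&: J) \subset J by rewrite subUset sub1set vJ subsetIr.
    move/subset_leq_card; rewrite cardsU1 inE (negbTE vX) /=; exact.
  have gp := i_good I pvX.
  have e : l - c = (l - c.+1).+1 by move: Hcard; rewrite -/J; lia.
  rewrite e /= inE in gp; case/andP: gp => _ /forall_inP /(_ v vJ) big.
  have U := used_card I; rewrite -/c in U.
  have [b bC bU] := exists_notin (A := [set b in Good (l - c.+1) | H (pos (par v)) (psi (par v)) b])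
    (B := psi @: X) (leq_ltn_trans U (leq_trans (leq_ltn_trans cJ Hcard) big)).
  move: bC; rewrite inE => /andP [bG bH].
  have bnot : forall y, y \in X -> psi y <> b.
    by move=> y yX e'; move: bU; rewrite -e' (imset_f psi yX).
  have cX' : #|(v |: X) :&: J| = c.+1.
    rewrite setIUl (_ : [set v] :&: J = [set v]); last by apply/setIidPl; rewrite sub1set.
    by rewrite cardsU1 inE (negbTE vX).
  have uX : forall x, x \in X -> upd psi v b x = psi x := fun x xX => upd_X psi b vX xX.
  exists (upd psi v b); split.
  + by rewrite inE (i_r I) orbT.
  + move=> x; rewrite in_setU1 => /orP[/eqP->|xX] xr; rewrite in_setU1 ?pvX ?(i_par I xX xr) orbT //.
  + move=> x; rewrite in_setU1 => /orP[/eqP->|xX] xr ncx; first by rewrite cv in ncx.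
    rewrite (uX x xX) (uX _ (i_par I xX xr)). exact: (i_nc I xX xr ncx).
  + move=> x; rewrite in_setU1 => /orP[/eqP->|xX] cx.
      by rewrite upd_v (uX _ pvX).
    by rewrite (uX x xX) (uX _ (i_par I xX (proj1 (Hc cx)))); exact: (i_c I xX cx).
  + move=> x y; rewrite !in_setU1 => /orP[/eqP->|xX] /orP[/eqP->|yX] //.
    * by rewrite upd_v (uX y yX) => e'; case: (bnot y yX (esym e')).
    * by rewrite upd_v (uX x xX) => e'; case: (bnot x xX e').
    * by rewrite (uX x xX) (uX y yX); exact: (i_inj I xX yX).
  + move=> x; rewrite cX' in_setU1 => /orP[/eqP->|xX]; first by rewrite upd_v.
    rewrite (uX x xX); apply: (subsetP (Good_mono _)) (i_good I xX); lia.
  + move=> x; rewrite in_setU1 => /orP[/eqP->|xX].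
      by exists v; rewrite ?in_setU1 ?eqxx // cv orbT.
    have [s sX st] := i_start I xX; exists s; first by rewrite in_setU1 sX orbT.
    by rewrite (uX s sX) (uX x xX).
  + move=> s y; rewrite !in_setU1 => /orP[/eqP->|sX] /orP[/eqP->|yX] //.
    * by rewrite upd_v (uX y yX) => _ e'; case: (bnot y yX (esym e')).
    * by rewrite upd_v (uX s sX) => _ e'; case: (bnot s sX e').
    * by rewrite (uX s sX) (uX y yX); exact: (i_min I sX yX).
- have key : forall y, y \in X -> psi y = psi (par v) -> pos y = (pos (par v)).+1 -> False.
    move=> y yX ey py; case: (boolP ((y == r) || cross y)) => sy.
      by have := i_min I yX pvX sy ey; rewrite py ltnn.
    move: sy; rewrite negb_or => /andP [yr ncy].
    have e1 := i_nc I yX yr ncy; have e2 := Hnc yr ncy.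
    have pe : pos (par y) = pos (par v) by move: py; rewrite e2 => -[].
    have pp := i_inj I (i_par I yX yr) pvX (etrans (esym e1) ey) pe.
    have yv := Huniq yr vr ncy cv pp.
    by move: yX; rewrite yv (negbTE vX).
  have vJ : v \notin J by rewrite inE.
  have cX' : (v |: X) :&: J = X :&: J.
    rewrite setIUl (_ : [set v] :&: J = set0) ?set0U //.
    by apply/setP => x; rewrite !inE; case: eqP => // ->; rewrite (negbTE cv).
  have pvpos := Hnc vr cv.
  have uX : forall x, x \in X -> upd psi v (psi (par v)) x = psi x :=
    fun x xX => upd_X psi (psi (par v)) vX xX.
  exists (upd psi v (psi (par v))); split.
  + by rewrite inE (i_r I) orbT.
  + move=> x; rewrite in_setU1 => /orP[/eqP->|xX] xr; rewrite in_setU1 ?pvX ?(i_par I xX xr) orbT //.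
  + move=> x; rewrite in_setU1 => /orP[/eqP->|xX] xr ncx.
      by rewrite upd_v (uX _ pvX).
    by rewrite (uX x xX) (uX _ (i_par I xX xr)); exact: (i_nc I xX xr ncx).
  + move=> x; rewrite in_setU1 => /orP[/eqP->|xX] cx; first by rewrite cx in cv.
    by rewrite (uX x xX) (uX _ (i_par I xX (proj1 (Hc cx)))); exact: (i_c I xX cx).
  + move=> x y; rewrite !in_setU1 => /orP[/eqP->|xX] /orP[/eqP->|yX] //.
    * rewrite upd_v (uX y yX) => e' pe; case: (key y yX (esym e')).
      by rewrite -pe.
    * rewrite upd_v (uX x xX) => e' pe; case: (key x xX e').
      by rewrite pe.
    * by rewrite (uX x xX) (uX y yX); exact: (i_inj I xX yX).
  + move=> x; rewrite cX' in_setU1 => /orP[/eqP->|xX]; first by rewrite upd_v; exact: i_good.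
    by rewrite (uX x xX); exact: (i_good I xX).
  + move=> x; rewrite in_setU1 => /orP[/eqP->|xX].
      have [s sX st] := i_start I pvX; exists s; first by rewrite in_setU1 sX orbT.
      by rewrite upd_v (uX s sX).
    have [s sX st] := i_start I xX; exists s; first by rewrite in_setU1 sX orbT.
    by rewrite (uX s sX) (uX x xX).
  + move=> s y; rewrite !in_setU1 => /orP[/eqP->|sX] /orP[/eqP->|yX] //.
    * by rewrite (negbTE vr) (negbTE cv).
    * rewrite upd_v (uX s sX) => st e'.
      by rewrite pvpos; apply: leqW; exact: (i_min I sX pvX st e').
    * by rewrite (uX s sX) (uX y yX); exact: (i_min I sX yX).
Qed.

Lemma inv_grow k : k < #|T| -> exists X psi, inv X psi /\ #|X| = k.+1.
Proof.
elim: k => [|k IH] lt.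
  by have [psi I] := inv_init; exists [set r], psi; rewrite cards1.
have [X [psi [I cX]]] := IH (ltnW lt).
have [x0 x0X] : exists x0, x0 \notin X.
  apply/existsP; apply: contraTT lt; rewrite negb_exists => /forallP h.
  have XT : X = setT by apply/setP => x; move: (h x); rewrite negbK inE.
  by move: cX; rewrite XT cardsT => ->; rewrite ltnn.
case: (@arg_minnP _ x0 (fun x => x \notin X) dep x0X) => v vX vmin.
have vr : v != r by apply: contraNneq vX => ->; exact: (i_r I).
have pvX : par v \in X.
  apply: contraT => npv; have := vmin _ npv; by rewrite leqNgt (Hdep vr).
have [psi' I'] := inv_step I vX vr pvX.
by exists (v |: X), psi'; rewrite cardsU1 vX cX.
Qed.

Lemma embed : exists f : T -> V, injective f /\ forall u v, ET u v -> G (f u) (f v).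
Proof.
have T0 : 0 < #|T| by apply/card_gt0P; exists r.
have T1 : #|T|.-1 < #|T| by rewrite prednK.
have [X [psi [I cX]]] := inv_grow T1.
have XT : X = setT by apply/eqP; rewrite eqEcard subsetT cardsT cX prednK // leqnn.
rewrite XT in I.
exists (fun x => Q (psi x) (pos x)); split.
  move=> x y e; have [e1 e2] := Qinj (ltn_ord _) (Hpos x) (ltn_ord _) (Hpos y) e.
  exact: (i_inj I (in_setT x) (in_setT y) (val_inj e1) e2).
move=> u v e; have [vr ->] := Hedge e.
case: (boolP (cross v)) => cv.
  have := i_c I (in_setT v) cv; rewrite /H; have [_ ->] := Hc cv; exact.
rewrite (i_nc I (in_setT v) vr cv) (Hnc vr cv); apply: Qe => //.
by rewrite -(Hnc vr cv).
Qed.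

End Embed.

Unset Implicit Arguments.
Theorem mainTheorem19 :
  forall l : nat, 0 < l ->
  exists c : nat,
    forall (T : finType) (ET : rel T), out_tree ET -> #|out_leaves ET| = l ->
    forall m : nat, 0 < m ->
    forall (V : finType) (G : rel V), c * #|T| * m <= #|V| ->
      contains_copy ET G \/ exists S : {set V}, #|S| = m /\ independent G S.
Proof.
move=> l l0; exists (2 * l * l * l + 2).
move=> T ET [_ [[T0 [Hund Hedges]] [r Hroot]]] hl m m0 V G hV.
case: (classic (exists S : {set V}, #|S| = m /\ independent G S)) => [h|h]; first by right.
left.
have noind : forall S : {set V}, #|S| = m -> ~ independent G S.
  by move=> S cS iS; apply: h; exists S.
pose M := l * (l * (2 * l * m)) + 1.
have V0 : 0 < #|V|.
  apply: leq_trans hV; rewrite !muln_gt0 T0 m0 andbT; lia.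
have [x0 _] : exists x0 : V, x0 \in [set: V] by apply/card_gt0P; rewrite cardsT.
have hM : (M + m) * #|T| <= #|V|.
  apply: leq_trans hV; rewrite mulnAC; apply: leq_mul => //; rewrite /M; nia.
have [Q [Qinj Qe]] := paths_family x0 T0 noind hM.
have Hcard : #|[set v | cross ET r v]| < l.
  have := card_cross Hund Hedges Hroot; rewrite hl; lia.
have HM : l * (l * (2 * l * m)) < M by rewrite /M addn1.
have [f [finj fe]] := embed (r := r) (par := par ET) (cross := cross ET r)
  (pos := pos Hund Hedges Hroot) (dep := dep Hund Hedges Hroot) (l := l)
  (V := V) (G := G) (n := #|T|) (m := m) (M := M) (Q := Q)
  (edge_par Hund Hedges Hroot)
  (pos_noncross Hund Hedges Hroot)
  (fun v cv => conj (proj1 (andP cv)) (pos_cross Hund Hedges Hroot cv))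
  (pos_lt Hund Hedges Hroot) Hcard
  (noncross_unique (ET := ET) (r := r))
  (dep_par_lt Hund Hedges Hroot) Qinj Qe noind HM.
by exists f.
Qed.
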